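(* If $X$ satisfies $selSS^*_{cd}(\mathcal{O},\Gamma)$, has countable extent, and $|X|<\mathfrak{b}$, then $X$ is selectively strongly star-Hurewicz.
   Context: All spaces are regular. $St(A,\mathcal{U})=\bigcup\{U\in\mathcal{U}:U\cap A\neq\emptyset\}$. $\mathfrak{b}$ is the bounding number. $X$ has countable extent if every closed discrete subset of $X$ is countable. $selSS^*_{cd}(\mathcal{O},\Gamma)$: for every sequence $(\mathcal{U}_n:n\in\omega)$ of open covers and every sequence $(D_n:n\in\omega)$ of dense subsets of $X$ there are sets $C_n\subseteq D_n$, closed and discrete in $X$, such that every $x\in X$ lies in $St(C_n,\mathcal{U}_n)$ for all but finitely many $n$. $X$ is selectively strongly star-Hurewicz if for every sequence $(\mathcal{U}_n)$ of open covers and every sequence $(D_n)$ of dense subsets there are finite $F_n\subseteq D_n$ such that every $x\in X$ lies in $St(F_n,\mathcal{U}_n)$ for all but finitely many $n$. *)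

(* Defs.v *)
From HB Require Import structures.
From mathcomp Require Import all_boot all_order.
From mathcomp Require Import all_classical all_reals all_analysis.
Set Implicit Arguments. Unset Strict Implicit. Unset Printing Implicit Defensive.
Local Open Scope classical_set_scope.

Definition star {X : Type} (A : set X) (U : set (set X)) : set X :=
  \bigcup_(V in [set V | U V /\ V `&` A !=set0]) V.

Definition open_cover {X : topologicalType} (U : set (set X)) : Prop :=
  (forall V, U V -> open V) /\ \bigcup_(V in U) V = setT.

Definition closed_discrete {X : topologicalType} (C : set X) : Prop :=
  closed C /\ forall x, C x -> exists W : set X, open W /\ W x /\ W `&` C = [set x].

Definition countable_extent (X : topologicalType) : Prop :=
  forall C : set X, closed_discrete C -> countable C.

Definition le_star (f g : nat -> nat) : Prop :=
  exists N, forall n, (N <= n)%N -> (f n <= g n)%N.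

Definition unbounded_family (A : set (nat -> nat)) : Prop :=
  ~ exists g, forall f, A f -> le_star f g.

(* |X| < b, where b = min { |A| : A unbounded in omega^omega under eventual domination }:
   no unbounded family has cardinality <= |X|. *)
Definition card_lt_bounding (X : Type) : Prop :=
  ~ exists A : set (nat -> nat), unbounded_family A /\ (A #<= @setT X)%card.

Definition selSS_cd_O_Gamma (X : topologicalType) : Prop :=
  forall (U : nat -> set (set X)) (D : nat -> set X),
    (forall n, open_cover (U n)) -> (forall n, dense (D n)) ->
    exists C : nat -> set X,
      (forall n, C n `<=` D n /\ closed_discrete (C n)) /\
      forall x : X, exists N, forall n, (N <= n)%N -> star (C n) (U n) x.

Definition sel_strongly_star_Hurewicz (X : topologicalType) : Prop :=
  forall (U : nat -> set (set X)) (D : nat -> set X),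
    (forall n, open_cover (U n)) -> (forall n, dense (D n)) ->
    exists F : nat -> set X,
      (forall n, F n `<=` D n /\ finite_set (F n)) /\
      forall x : X, exists N, forall n, (N <= n)%N -> star (F n) (U n) x.

(* Main.v *)
Require Import Defs.
From mathcomp Require Import all_boot all_order.
From mathcomp Require Import all_classical all_reals all_analysis.
Local Open Scope classical_set_scope.

Theorem mainTheorem12 (X : topologicalType) :
  regular_space X ->
  selSS_cd_O_Gamma X -> countable_extent X -> card_lt_bounding X ->
  sel_strongly_star_Hurewicz X.
Proof.
move=> _ Hsel Hext Hb U D HU HD.
have [C [HC Hst]] := Hsel U D HU HD.
have /choice [h Hh] : forall n, exists h : X -> nat, {in C n &, injective h}.
  by move=> n; apply/countable_injP; apply: Hext; exact: (HC n).2.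
pose P x n c := C n c /\ exists V, U n V /\ V x /\ V c.
have /choice [fx Hfx] : forall x, exists f : nat -> nat,
    forall n, (exists c, P x n c) -> exists c, P x n c /\ f n = h n c.
  move=> x; suff /choice [f Hf] : forall n, exists k, (exists c, P x n c) -> exists c, P x n c /\ k = h n c by exists f.
  move=> n.
  have [[c Pc]|nc] := pselect (exists c, P x n c).
    by exists (h n c) => _; exists c.
  by exists 0%N => E; exfalso; apply: nc.
have [[g Hg]|nex] := pselect (exists g, forall x, le_star (fx x) g); last first.
  exfalso; apply: Hb; exists (fx @` setT); split; last exact: card_image_le.
  move=> [g Hg]; apply: nex; exists g => x; apply: Hg; by exists x.
exists (fun n => [set c | C n c /\ (h n c <= g n)%N]); split.
  move=> n; split; first by move=> c [Cc _]; exact: (HC n).1.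
  set F := [set c | C n c /\ (h n c <= g n)%N].
  have HF : (h n @` F #= F)%card.
    by apply: inj_card_eq => a b /set_mem [Ca _] /set_mem [Cb _]; apply: Hh; apply/mem_set.
  rewrite -(eq_finite_set HF).
  apply: (@sub_finite_set _ _ `I_(g n).+1); last exact: finite_II.
  by move=> k [c [_ hc] <-] /=; exact: hc.
move=> x; have [N1 HN1] := Hst x; have [N2 HN2] := Hg x.
exists (maxn N1 N2) => n Hn.
have [V [UV [c [Vc Cc]]] Vx] := HN1 n (leq_trans (leq_maxl _ _) Hn).
have Pc : P x n c by split; [exact: Cc | exists V; split; [exact: UV | split; [exact: Vx | exact: Vc]]].
have [c' [[Cc' [V' [UV' [V'x V'c]]]] E]] := Hfx x n (ex_intro _ c Pc).
have hc' : (h n c' <= g n)%N.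
  by rewrite -E; apply: HN2; exact: (leq_trans (leq_maxr _ _) Hn).
exists V'; last exact: V'x.
split; first exact: UV'.
by exists c'; split; [exact: V'c | split; [exact: Cc' | exact: hc']].
Qed.
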